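(* In the linear setting below, assume $Q=Q^\top\succ0$, $R=R^\top\succ0$, $P=P^\top\succ0$ and $-(K^\top RK+Q)\succeq(A-BK)^\top P(A-BK)-P$. Define the terminal set $\mathcal T=\{(x,r):\Delta(x,r)\le0\}$, where $\Delta(x,r)=\max_{i\in\{1,\dots,n\}}\alpha_i[V(x,r)-\Lambda_i(r)]$ with positive scalars $\alpha_i$, $V(x,r)=\|x-\bar x_r\|_P^2$, and $$\Lambda_i(r)=\frac{[d_i(r)-c_i(r)^\top\bar x_r]^2}{c_i(r)^\top P^{-1}c_i(r)},$$ where $\{x:c_i(r)^\top x\le d_i(r),\ i=1,\dots,n\}=\mathcal C\cap\{x:\kappa_T(x,r)\in\mathcal U\}\cap\bigcap_{j=1}^m H_{\mathcal O_j}(\bar x_r)$. Then: (c) for all $(x,r)\in\mathcal T$, $(Ax+B\kappa_T(x,r),r)\in\mathcal T$, $x\in\mathcal X$ and $\kappa_T(x,r)\in\mathcal U$; and (d) $(\bar x_r,r)\in\operatorname{int}\mathcal T$ for all $r\in\mathcal R_\epsilon$.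
   Context: System $x_{k+1}=Ax_k+Bu_k$ with $(A,B)$ stabilizable; equilibria $\bar x_r=G_xr$, $\bar u_r=G_ur$, where the columns of $[G_x^\top\ G_u^\top]^\top$ form a basis of $\ker[A-I\ \ B]$. Constraints $x\in\mathcal X=\mathcal C\cap\bigcap_{j=1}^m\mathcal O_j^{\complement}$, $u\in\mathcal U$, where $\mathcal C$ and $\mathcal U$ are compact polyhedra and each $\mathcal O_j\subseteq\mathbb R^{n_x}$ is a convex obstacle (inflated by a safety margin). Writing $\mathcal X=\{x:h_x(x)\le0\}$, $\mathcal U=\{u:h_u(u)\le0\}$, for fixed $\epsilon>0$ set $\mathcal R_\epsilon=\{r: h_x(\bar x_r)\le-\epsilon,\ h_u(\bar u_r)\le-\epsilon\}$. Terminal law $\kappa_T(x,r)=\bar u_r-K(x-\bar x_r)$, $K\in\mathbb R^{n_u\times n_x}$; $\|z\|_M^2=z^\top Mz$. For an obstacle $\mathcal O$: $\Pi_{\mathcal O}(x)=\arg\min_{y\in\mathcal O}\|x-y\|$ and $H_{\mathcal O}(x)=\{y:[x-\Pi_{\mathcal O}(x)]^\top[y-\Pi_{\mathcal O}(x)]\ge0\}$ (a half-space over-approximation of $\mathcal O^{\complement}$). *)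

(* Defs.v *)
From HB Require Import structures.
From mathcomp Require Import all_boot all_order all_algebra.
From mathcomp Require Import boolp classical_sets reals ereal topology normedtype sequences.
Set Implicit Arguments.
Unset Strict Implicit.
Unset Printing Implicit Defensive.
Import Order.TTheory GRing.Theory Num.Theory numFieldNormedType.Exports.
Local Open Scope ring_scope.
Local Open Scope classical_set_scope.

Definition qf {R : realType} {n : nat} (M : 'M[R]_n) (x : 'cV[R]_n) : R :=
  (x^T *m M *m x) 0 0.

Definition symmetric {R : realType} {n : nat} (M : 'M[R]_n) : Prop := M^T = M.

Definition posdef {R : realType} {n : nat} (M : 'M[R]_n) : Prop :=
  symmetric M /\ forall x : 'cV[R]_n, x != 0 -> 0 < qf M x.

Definition psd {R : realType} {n : nat} (M : 'M[R]_n) : Prop :=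
  forall x : 'cV[R]_n, 0 <= qf M x.

Definition enorm {R : realType} {n : nat} (x : 'cV[R]_n) : R :=
  Num.sqrt (qf 1%:M x).

Definition stabilizable {R : realType} {nx nu : nat}
  (A : 'M[R]_nx) (B : 'M[R]_(nx, nu)) : Prop :=
  exists F : 'M[R]_(nu, nx), forall i j : 'I_nx,
    (fun k : nat => ((A + B *m F) ^+ k) i j) @ \oo --> (0 : R).

Definition equilibrium_basis {R : realType} {nx nu nr : nat}
  (A : 'M[R]_nx) (B : 'M[R]_(nx, nu)) (Gx : 'M[R]_(nx, nr)) (Gu : 'M[R]_(nu, nr)) : Prop :=
  let M := row_mx (A - 1%:M) B in
  let G := col_mx Gx Gu in
  [/\ M *m G = 0,
      (forall z : 'cV[R]_(nx + nu), M *m z = 0 -> exists w : 'cV[R]_nr, z = G *m w)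
    & (forall w : 'cV[R]_nr, G *m w = 0 -> w = 0)].

Definition polyhedron {R : realType} {p n : nat} (F : 'M[R]_(p, n)) (f : 'cV[R]_p)
  : set 'cV[R]_n := [set x | forall i, (F *m x) i 0 <= f i 0].

Definition ebounded {R : realType} {n : nat} (S : set 'cV[R]_n) : Prop :=
  exists M : R, forall x, S x -> enorm x <= M.

Definition convex_set {R : realType} {n : nat} (S : set 'cV[R]_n) : Prop :=
  forall x y (t : R), S x -> S y -> 0 <= t <= 1 -> S (t *: x + (1 - t) *: y).

Definition eopen {R : realType} {n : nat} (S : set 'cV[R]_n) : Prop :=
  forall x, S x -> exists2 e : R, 0 < e & forall y, enorm (y - x) < e -> S y.

Definition in_closure {R : realType} {n : nat} (S : set 'cV[R]_n) (z : 'cV[R]_n) : Prop :=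
  forall e : R, 0 < e -> exists2 y, S y & enorm (z - y) < e.

Definition is_proj {R : realType} {n : nat} (S : set 'cV[R]_n) (x p : 'cV[R]_n) : Prop :=
  in_closure S p /\ forall y, S y -> enorm (x - p) <= enorm (x - y).

Definition edist {R : realType} {n : nat} (S : set 'cV[R]_n) (x : 'cV[R]_n) : R :=
  inf [set enorm (x - y) | y in S].

Definition sdist {R : realType} {n : nat} (S : set 'cV[R]_n) (x : 'cV[R]_n) : R :=
  edist (~` S) x - edist S x.

Definition xbar {R : realType} {nx nr : nat} (Gx : 'M[R]_(nx, nr)) (r : 'cV[R]_nr)
  : 'cV[R]_nx := Gx *m r.
Definition ubar {R : realType} {nu nr : nat} (Gu : 'M[R]_(nu, nr)) (r : 'cV[R]_nr)
  : 'cV[R]_nu := Gu *m r.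

Definition kappaT {R : realType} {nx nu nr : nat} (Gx : 'M[R]_(nx, nr))
  (Gu : 'M[R]_(nu, nr)) (K : 'M[R]_(nu, nx)) (x : 'cV[R]_nx) (r : 'cV[R]_nr)
  : 'cV[R]_nu := ubar Gu r - K *m (x - xbar Gx r).

Definition Xset {R : realType} {nx pc m : nat} (Fc : 'M[R]_(pc, nx)) (fc : 'cV[R]_pc)
  (O : 'I_m -> set 'cV[R]_nx) : set 'cV[R]_nx :=
  [set x | polyhedron Fc fc x /\ forall j, ~ O j x].

(* Row (c_i(r), d_i(r)) of the half-space description of
     C /\ {x | kappa_T(x,r) in U} /\ (intersection_j H_{O_j}(xbar_r)),
   with U = {Fu u <= fu}. Indices: first pc rows of C, then pu rows coming
   from the input constraint, then one row per obstacle half-space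
   H_O(xbar) = {y | (xbar - Pi(xbar))^T (y - Pi(xbar)) >= 0}. *)
Definition crow {R : realType} {nx nu nr pc pu m : nat}
  (Fc : 'M[R]_(pc, nx)) (fc : 'cV[R]_pc) (Fu : 'M[R]_(pu, nu)) (fu : 'cV[R]_pu)
  (Pi : 'I_m -> 'cV[R]_nx -> 'cV[R]_nx)
  (Gx : 'M[R]_(nx, nr)) (Gu : 'M[R]_(nu, nr)) (K : 'M[R]_(nu, nx))
  (r : 'cV[R]_nr) (i : 'I_(pc + pu + m)) : 'cV[R]_nx * R :=
  match split i with
  | inl i1 =>
      match split i1 with
      | inl ic => ((row ic Fc)^T, fc ic 0)
      | inr iu => (- (row iu (Fu *m K))^T,
                   fu iu 0 - (Fu *m ubar Gu r) iu 0 - (Fu *m K *m xbar Gx r) iu 0)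
      end
  | inr j =>
      let p := Pi j (xbar Gx r) in
      let w := xbar Gx r - p in
      (- w, - (w^T *m p) 0 0)
  end.

Definition Lambda {R : realType} {nx nu nr pc pu m : nat}
  (Fc : 'M[R]_(pc, nx)) (fc : 'cV[R]_pc) (Fu : 'M[R]_(pu, nu)) (fu : 'cV[R]_pu)
  (Pi : 'I_m -> 'cV[R]_nx -> 'cV[R]_nx)
  (Gx : 'M[R]_(nx, nr)) (Gu : 'M[R]_(nu, nr)) (K : 'M[R]_(nu, nx)) (P : 'M[R]_nx)
  (i : 'I_(pc + pu + m)) (r : 'cV[R]_nr) : R :=
  let cd := crow Fc fc Fu fu Pi Gx Gu K r i in
  (cd.2 - (cd.1^T *m xbar Gx r) 0 0) ^+ 2 / qf (invmx P) cd.1.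

Definition Vfun {R : realType} {nx nr : nat} (Gx : 'M[R]_(nx, nr)) (P : 'M[R]_nx)
  (x : 'cV[R]_nx) (r : 'cV[R]_nr) : R := qf P (x - xbar Gx r).

(* Delta(x,r) = max_i alpha_i [V(x,r) - Lambda_i(r)], the max ranging over the
   (non-degenerate, c_i(r) <> 0) rows of the description; max of the empty
   family is -oo. *)
Definition Delta {R : realType} {nx nu nr pc pu m : nat}
  (Fc : 'M[R]_(pc, nx)) (fc : 'cV[R]_pc) (Fu : 'M[R]_(pu, nu)) (fu : 'cV[R]_pu)
  (Pi : 'I_m -> 'cV[R]_nx -> 'cV[R]_nx)
  (Gx : 'M[R]_(nx, nr)) (Gu : 'M[R]_(nu, nr)) (K : 'M[R]_(nu, nx)) (P : 'M[R]_nx)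
  (alpha : 'I_(pc + pu + m) -> R) (x : 'cV[R]_nx) (r : 'cV[R]_nr) : \bar R :=
  \big[maxe/-oo%E]_(i < pc + pu + m | (crow Fc fc Fu fu Pi Gx Gu K r i).1 != 0)
     ((alpha i * (Vfun Gx P x r - Lambda Fc fc Fu fu Pi Gx Gu K P i r))%:E).

Definition Tset {R : realType} {nx nu nr pc pu m : nat}
  (Fc : 'M[R]_(pc, nx)) (fc : 'cV[R]_pc) (Fu : 'M[R]_(pu, nu)) (fu : 'cV[R]_pu)
  (Pi : 'I_m -> 'cV[R]_nx -> 'cV[R]_nx)
  (Gx : 'M[R]_(nx, nr)) (Gu : 'M[R]_(nu, nr)) (K : 'M[R]_(nu, nx)) (P : 'M[R]_nx)
  (alpha : 'I_(pc + pu + m) -> R) (x : 'cV[R]_nx) (r : 'cV[R]_nr) : Prop :=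
  (Delta Fc fc Fu fu Pi Gx Gu K P alpha x r <= 0)%E.

Definition Reps {R : realType} {nx nu nr pc pu m : nat}
  (Fc : 'M[R]_(pc, nx)) (fc : 'cV[R]_pc) (Fu : 'M[R]_(pu, nu)) (fu : 'cV[R]_pu)
  (O : 'I_m -> set 'cV[R]_nx) (Gx : 'M[R]_(nx, nr)) (Gu : 'M[R]_(nu, nr))
  (eps : R) : set 'cV[R]_nr :=
  [set r | [/\ forall i, (Fc *m xbar Gx r - fc) i 0 <= - eps,
              forall j, sdist (O j) (xbar Gx r) <= - eps
            & forall i, (Fu *m ubar Gu r - fu) i 0 <= - eps]].

Definition interior_pt {R : realType} {nx nr : nat}
  (T : 'cV[R]_nx -> 'cV[R]_nr -> Prop) (x : 'cV[R]_nx) (r : 'cV[R]_nr) : Prop :=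
  exists2 e : R, 0 < e & forall x' r', enorm (x' - x) < e -> enorm (r' - r) < e -> T x' r'.

(* Main.v *)
Require Import Defs.
From HB Require Import structures.
From mathcomp Require Import all_boot all_order all_algebra.
From mathcomp Require Import boolp classical_sets reals ereal topology normedtype sequences.
From mathcomp Require Import ring lra.
Import Order.TTheory GRing.Theory Num.Theory numFieldNormedType.Exports.
Local Open Scope ring_scope.
Local Open Scope classical_set_scope.

Definition dotv {R : realType} {n : nat} (x y : 'cV[R]_n) : R := (x^T *m y) 0 0.

Lemma dotvE {R : realType} {n : nat} (x y : 'cV[R]_n) :
  dotv x y = \sum_i x i 0 * y i 0.
Proof. by rewrite /dotv !mxE; apply: eq_bigr => i _; rewrite !mxE. Qed.

Lemma dotvC {R : realType} {n : nat} (x y : 'cV[R]_n) : dotv x y = dotv y x.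
Proof. by rewrite !dotvE; apply: eq_bigr => i _; rewrite mulrC. Qed.

Lemma dotvDl {R : realType} {n : nat} (x y z : 'cV[R]_n) :
  dotv (x + y) z = dotv x z + dotv y z.
Proof. by rewrite !dotvE -big_split; apply: eq_bigr => i _; rewrite !mxE mulrDl. Qed.

Lemma dotvNl {R : realType} {n : nat} (x z : 'cV[R]_n) :
  dotv (- x) z = - dotv x z.
Proof. by rewrite !dotvE -sumrN; apply: eq_bigr => i _; rewrite !mxE mulNr. Qed.

Lemma dotvZl {R : realType} {n : nat} (a : R) (x z : 'cV[R]_n) :
  dotv (a *: x) z = a * dotv x z.
Proof. by rewrite !dotvE mulr_sumr; apply: eq_bigr => i _; rewrite !mxE mulrA. Qed.

Lemma dotvBl {R : realType} {n : nat} (x y z : 'cV[R]_n) :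
  dotv (x - y) z = dotv x z - dotv y z.
Proof. by rewrite dotvDl dotvNl. Qed.

Lemma dotvDr {R : realType} {n : nat} (x y z : 'cV[R]_n) :
  dotv z (x + y) = dotv z x + dotv z y.
Proof. by rewrite !(dotvC z) dotvDl. Qed.
Lemma dotvNr {R : realType} {n : nat} (x z : 'cV[R]_n) :
  dotv z (- x) = - dotv z x.
Proof. by rewrite !(dotvC z) dotvNl. Qed.
Lemma dotvBr {R : realType} {n : nat} (x y z : 'cV[R]_n) :
  dotv z (x - y) = dotv z x - dotv z y.
Proof. by rewrite !(dotvC z) dotvBl. Qed.
Lemma dotvZr {R : realType} {n : nat} (a : R) (x z : 'cV[R]_n) :
  dotv z (a *: x) = a * dotv z x.
Proof. by rewrite !(dotvC z) dotvZl. Qed.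

Lemma qfE {R : realType} {n : nat} (M : 'M[R]_n) (x : 'cV[R]_n) :
  qf M x = dotv x (M *m x).
Proof. by rewrite /qf /dotv mulmxA. Qed.

Lemma dotv_mulT {R : realType} {n k : nat} (M : 'M[R]_(n,k)) (y : 'cV[R]_k) (z : 'cV[R]_n) :
  dotv (M *m y) z = dotv y (M^T *m z).
Proof. by rewrite /dotv trmx_mul mulmxA. Qed.

Lemma dotv_sym {R : realType} {n : nat} (M : 'M[R]_n) (y z : 'cV[R]_n) :
  Defs.symmetric M -> dotv (M *m y) z = dotv y (M *m z).
Proof. by move=> sM; rewrite dotv_mulT sM. Qed.

Lemma dotv_ge0 {R : realType} {n : nat} (x : 'cV[R]_n) : 0 <= dotv x x.
Proof. by rewrite dotvE; apply: sumr_ge0 => i _; rewrite -expr2 sqr_ge0. Qed.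

Lemma dotv_eq0 {R : realType} {n : nat} (x : 'cV[R]_n) : dotv x x = 0 -> x = 0.
Proof.
rewrite dotvE => /eqP; rewrite psumr_eq0; last by move=> i _; rewrite -expr2 sqr_ge0.
move=> /allP H; apply/matrixP => i j; rewrite (ord1 j) mxE.
have := H i (mem_index_enum i); rewrite -expr2 sqrf_eq0 => /eqP //.
Qed.

Lemma quad_disc (R : realType) (a b c : R) :
  0 <= a -> (forall t, 0 <= a * t ^+ 2 + 2 * b * t + c) -> b ^+ 2 <= a * c.
Proof.
move=> a0 H; have [ap|] := ltP 0 a.
  have := H (- b / a).
  have -> : a * (- b / a) ^+ 2 + 2 * b * (- b / a) + c = c - b ^+ 2 / a.
    by field; rewrite gt_eqF.
  rewrite subr_ge0 ler_pdivrMr // mulrC //.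
move=> a0'; have a00 : a = 0 by apply/eqP; rewrite eq_le a0 a0'.
subst a; rewrite mul0r.
have [b0|bn0] := eqVneq b 0; first by rewrite b0 expr0n.
have := H (- (c + 1) / (2 * b)).
have -> : 0 * (- (c + 1) / (2 * b)) ^+ 2 + 2 * b * (- (c + 1) / (2 * b)) + c = -1.
  by field.
by rewrite ler0N1.
Qed.

Lemma cauchy_schwarz {R : realType} {n : nat} (M : 'M[R]_n) (y z : 'cV[R]_n) :
  Defs.symmetric M -> (forall v, 0 <= dotv v (M *m v)) ->
  dotv y (M *m z) ^+ 2 <= dotv y (M *m y) * dotv z (M *m z).
Proof.
move=> sM psdM; apply: quad_disc => // t.
have := psdM (t *: y + z).
rewrite mulmxDr -scalemxAr !(dotvDl, dotvDr, dotvZl, dotvZr).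
have -> : dotv z (M *m y) = dotv y (M *m z) by rewrite dotvC dotv_sym.
move=> h; apply: le_trans h _; rewrite le_eqVlt; apply/orP; left; apply/eqP; ring.
Qed.

Lemma sq_le {R : realType} (x y : R) : 0 <= y -> x ^+ 2 <= y ^+ 2 -> x <= y.
Proof. move=> y0 h; nra. Qed.

Lemma sqrt_le {R : realType} (a y : R) : 0 <= y -> a <= y ^+ 2 -> Num.sqrt a <= y.
Proof.
move=> y0 h; rewrite -(ger0_norm y0) -sqrtr_sqr ler_sqrt //; exact: sqr_ge0.
Qed.

Definition N1 {R : realType} {n : nat} (x : 'cV[R]_n) : R := \sum_i `|x i 0|.
Definition N1m {R : realType} {n k : nat} (M : 'M[R]_(n,k)) : R := \sum_i \sum_j `|M i j|.

Lemma N1_ge0 {R : realType} {n : nat} (x : 'cV[R]_n) : 0 <= N1 x.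
Proof. by apply: sumr_ge0 => i _. Qed.
Lemma N1m_ge0 {R : realType} {n k : nat} (M : 'M[R]_(n,k)) : 0 <= N1m M.
Proof. by apply: sumr_ge0 => i _; apply: sumr_ge0. Qed.

Lemma entry_le_N1 {R : realType} {n : nat} (x : 'cV[R]_n) i : `|x i 0| <= N1 x.
Proof. by rewrite /N1 (bigD1 i) //= lerDl; apply: sumr_ge0. Qed.

Lemma N1D {R : realType} {n : nat} (x y : 'cV[R]_n) : N1 (x + y) <= N1 x + N1 y.
Proof. rewrite /N1 -big_split; apply: ler_sum => i _; rewrite mxE; exact: ler_normD. Qed.
Lemma N1N {R : realType} {n : nat} (x : 'cV[R]_n) : N1 (- x) = N1 x.
Proof. by apply: eq_bigr => i _; rewrite mxE normrN. Qed.
Lemma N1B {R : realType} {n : nat} (x y : 'cV[R]_n) : N1 (x - y) <= N1 x + N1 y.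
Proof. by rewrite -(N1N y) N1D. Qed.

Lemma N1_mul {R : realType} {n k : nat} (M : 'M[R]_(n,k)) (v : 'cV[R]_k) :
  N1 (M *m v) <= N1m M * N1 v.
Proof.
rewrite /N1m mulr_suml; apply: ler_sum => i _; rewrite mxE.
apply: le_trans (ler_norm_sum _ _ _) _; rewrite mulr_suml; apply: ler_sum => j _.
rewrite normrM; apply: ler_wpM2l => //; exact: entry_le_N1.
Qed.

Lemma dotv_bound {R : realType} {n : nat} (a b : 'cV[R]_n) :
  `|dotv a b| <= N1 a * N1 b.
Proof.
rewrite dotvE /N1 mulr_suml; apply: le_trans (ler_norm_sum _ _ _) _.
apply: ler_sum => i _; rewrite normrM; apply: ler_wpM2l => //; exact: entry_le_N1.
Qed.

Lemma qf_bound {R : realType} {n : nat} (M : 'M[R]_n) (x : 'cV[R]_n) :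
  `|dotv x (M *m x)| <= N1m M * N1 x ^+ 2.
Proof.
apply: le_trans (dotv_bound _ _) _.
have := N1_mul M x; have := N1_ge0 x; have := N1_ge0 (M *m x); have := N1m_ge0 M.
move=> h1 h2 h3 h4; nra.
Qed.

Lemma enorm_sqr {R : realType} {n : nat} (x : 'cV[R]_n) : enorm x ^+ 2 = dotv x x.
Proof. by rewrite /enorm sqr_sqrtr qfE mul1mx // dotv_ge0. Qed.
Lemma enormE {R : realType} {n : nat} (x : 'cV[R]_n) : enorm x = Num.sqrt (dotv x x).
Proof. by rewrite /enorm qfE mul1mx. Qed.
Lemma enorm_ge0 {R : realType} {n : nat} (x : 'cV[R]_n) : 0 <= enorm x.
Proof. exact: sqrtr_ge0. Qed.

Lemma entry_le_enorm {R : realType} {n : nat} (x : 'cV[R]_n) i : `|x i 0| <= enorm x.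
Proof.
apply: sq_le; first exact: enorm_ge0.
rewrite enorm_sqr dotvE (bigD1 i) //= real_normK ?num_real // -expr2 lerDl.
by apply: sumr_ge0 => j _; rewrite -expr2 sqr_ge0.
Qed.

Lemma N1_le_enorm {R : realType} {n : nat} (x : 'cV[R]_n) : N1 x <= n%:R * enorm x.
Proof.
apply: le_trans (_ : \sum_(i < n) enorm x <= _).
  by apply: ler_sum => i _; exact: entry_le_enorm.
by rewrite sumr_const card_ord mulr_natl.
Qed.

Lemma enorm_le_N1 {R : realType} {n : nat} (x : 'cV[R]_n) : enorm x <= N1 x.
Proof.
rewrite enormE; apply: sqrt_le; first exact: N1_ge0.
have := dotv_bound x x; have := ler_norm (dotv x x) => h1 h2.
by apply: le_trans h1 _; rewrite expr2.
Qed.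

Lemma N1_rowT {R : realType} {n k : nat} (M : 'M[R]_(n,k)) i : N1 ((row i M)^T) <= N1m M.
Proof.
rewrite /N1m (bigD1 i) //= -[X in X <= _]addr0 lerD //; last by apply: sumr_ge0 => *; apply: sumr_ge0.
by rewrite le_eqVlt; apply/orP; left; apply/eqP; rewrite /N1; apply: eq_bigr => j _; rewrite !mxE.
Qed.

Lemma dotv_le_enorm {R : realType} {n : nat} (a b : 'cV[R]_n) :
  dotv a b <= enorm a * enorm b.
Proof.
apply: sq_le; first by rewrite mulr_ge0 // enorm_ge0.
rewrite exprMn !enorm_sqr.
have := @cauchy_schwarz R n 1%:M a b; rewrite !mul1mx; apply.
  by rewrite /Defs.symmetric trmx1.
by move=> v; rewrite mul1mx dotv_ge0.
Qed.

Lemma enormD {R : realType} {n : nat} (a b : 'cV[R]_n) :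
  enorm (a + b) <= enorm a + enorm b.
Proof.
rewrite {1}enormE; apply: sqrt_le; first by rewrite addr_ge0 // enorm_ge0.
rewrite dotvDl !dotvDr (dotvC b a) sqrrD !enorm_sqr.
have := dotv_le_enorm a b; lra.
Qed.

Lemma enormN {R : realType} {n : nat} (a : 'cV[R]_n) : enorm (- a) = enorm a.
Proof. by rewrite !enormE dotvNl dotvNr opprK. Qed.

Lemma dotv0l {R : realType} {n : nat} (x : 'cV[R]_n) : dotv 0 x = 0.
Proof. by rewrite dotvE big1 // => i _; rewrite mxE mul0r. Qed.

Lemma posdef_psd {R : realType} {n : nat} (P : 'M[R]_n) :
  posdef P -> forall v, 0 <= dotv v (P *m v).
Proof.
move=> [_ pP] v; have [->|vn0] := eqVneq v 0; first by rewrite dotv0l.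
by rewrite -qfE; apply: ltW; apply: pP.
Qed.

Lemma posdef_unit {R : realType} {n : nat} (P : 'M[R]_n) : posdef P -> P \in unitmx.
Proof.
move=> [sP pP]; rewrite unitmxE unitfE; apply/negP => /det0P [v vn0 vP].
have : v^T != 0 by apply: contra vn0 => /eqP h; rewrite -[v]trmxK h trmx0.
move=> /pP; rewrite /qf.
have -> : v^T^T *m P = 0 by rewrite trmxK vP.
by rewrite mul0mx mxE ltxx.
Qed.

Lemma qinv_eq {R : realType} {n : nat} (P : 'M[R]_n) (c : 'cV[R]_n) :
  posdef P -> P *m (invmx P *m c) = c.
Proof. by move=> pP; rewrite mulmxA mulmxV ?mul1mx // posdef_unit. Qed.

Lemma qinv_pos {R : realType} {n : nat} (P : 'M[R]_n) (c : 'cV[R]_n) :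
  posdef P -> c != 0 -> 0 < qf (invmx P) c.
Proof.
move=> pP cn0; set y := invmx P *m c.
have Py : P *m y = c by exact: qinv_eq.
have yn0 : y != 0 by apply: contra cn0 => /eqP y0; rewrite -Py y0 mulmx0.
rewrite qfE -/y -{1}Py dotv_sym; last by case: pP.
by rewrite -qfE; case: pP => _; apply.
Qed.

Lemma key_halfspace {R : realType} {n : nat} (P : 'M[R]_n) (c x xb : 'cV[R]_n) (d : R) :
  posdef P -> c != 0 -> 0 <= d - dotv c xb ->
  qf P (x - xb) <= (d - dotv c xb) ^+ 2 / qf (invmx P) c -> dotv c x <= d.
Proof.
move=> pP cn0 a0 hV; set y := invmx P *m c.
have Py : P *m y = c by exact: qinv_eq.
have q0 := @qinv_pos _ _ P c pP cn0.
have qE : qf (invmx P) c = dotv y (P *m y).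
  by rewrite qfE -/y -{1}Py dotv_sym //; case: pP.
have cz : dotv c (x - xb) = dotv y (P *m (x - xb)).
  by rewrite -{1}Py dotv_sym //; case: pP.
have cs := @cauchy_schwarz _ _ P y (x - xb) (proj1 pP) (@posdef_psd _ _ P pP).
rewrite -qE -qfE -cz in cs.
have h1 : dotv c (x - xb) ^+ 2 <= (d - dotv c xb) ^+ 2.
  apply: le_trans cs _; rewrite mulrC -ler_pdivlMr //.
have := @sq_le _ _ _ a0 h1; rewrite dotvBr; lra.
Qed.

Lemma bigmax_le0E {R : realType} {k : nat} (Pr : pred 'I_k) (F : 'I_k -> R) :
  (\big[maxe/-oo%E]_(i < k | Pr i) (F i)%:E <= 0)%E -> forall i, Pr i -> F i <= 0.
Proof.
move=> h i Pi; move: h; rewrite (bigD1 i) //= ge_max => /andP [h _].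
by rewrite -lee_fin.
Qed.

Lemma bigmax_le0I {R : realType} {k : nat} (Pr : pred 'I_k) (F : 'I_k -> R) :
  (forall i, Pr i -> F i <= 0) -> (\big[maxe/-oo%E]_(i < k | Pr i) (F i)%:E <= 0)%E.
Proof.
move=> h; apply: (big_ind (fun v => v <= 0)%E) => //. all: try (by move=> a b ha hb; rewrite ge_max ha hb). all: try (by move=> i Pi; rewrite lee_fin h).
Qed.

Lemma enormB {R : realType} {n : nat} (a b : 'cV[R]_n) : enorm (a - b) = enorm (b - a).
Proof. by rewrite -enormN opprB. Qed.

Lemma enorm_le_sq {R : realType} {n : nat} (a b : 'cV[R]_n) :
  enorm a <= enorm b -> dotv a a <= dotv b b.
Proof.
move=> h; rewrite -!enorm_sqr; have := enorm_ge0 a; have := enorm_ge0 b; nra.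
Qed.

Lemma expand3 {R : realType} {n : nat} (w e v : 'cV[R]_n) (t : R) :
  dotv (w + e - t *: (v + e)) (w + e - t *: (v + e)) =
  dotv w w + 2 * dotv w e + dotv e e - 2 * t * (dotv w v + dotv w e + dotv e v + dotv e e)
  + t ^+ 2 * (dotv v v + 2 * dotv e v + dotv e e).
Proof.
rewrite !(dotvDl, dotvDr, dotvNl, dotvNr, dotvZl, dotvZr).
rewrite ?(dotvC e w) ?(dotvC v w) ?(dotvC v e); ring.
Qed.

Lemma proj_var {R : realType} {n : nat} (O : set 'cV[R]_n) (xb p : 'cV[R]_n) :
  convex_set O -> in_closure O p -> (forall y, O y -> enorm (xb - p) <= enorm (xb - y)) ->
  forall y, O y -> dotv (xb - p) (y - p) <= 0.
Proof.
move=> cO clp pr y Oy; rewrite leNgt; apply/negP => g0.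
set w := xb - p; set v0 := y - p; set g := dotv w v0.
set W := N1 w; set Vv := N1 v0; set L := (Vv + 1) ^+ 2.
have W0 : 0 <= W by exact: N1_ge0.
have V0 : 0 <= Vv by exact: N1_ge0.
have L0 : 0 < L by rewrite exprn_gt0 // ltr_wpDl.
set t := g / (L + g).
have Lg0 : 0 < L + g by rewrite addr_gt0.
have tE : t * (L + g) = g by rewrite /t divfK // gt_eqF.
have t0 : 0 < t by rewrite /t divr_gt0.
have t1 : t <= 1 by nra.
have tL : t * L <= g by nra.
set K0 := 4 * W + 2 * Vv + 3.
have K00 : 0 < K0 by rewrite /K0; lra.
set ep := t * g / (K0 + t * g + 1).
have tg0 : 0 < t * g by rewrite mulr_gt0.
have den0 : 0 < K0 + t * g + 1 by lra.
have epE : ep * (K0 + t * g + 1) = t * g by rewrite /ep divfK // gt_eqF.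
have ep0 : 0 < ep by rewrite /ep divr_gt0.
have ep1 : ep <= 1 by nra.
have epK : ep * K0 < t * g by nra.
have n10 : 0 < n.+1%:R :> R by rewrite ltr0n.
have [z Oz hz] := clp (ep / n.+1%:R) (divr_gt0 ep0 n10).
set e := p - z.
have E0 : 0 <= N1 e by exact: N1_ge0.
have hE : N1 e < ep.
  have h1 := N1_le_enorm e.
  have h2 : enorm e * n.+1%:R < ep by rewrite -ltr_pdivlMr.
  have h3 := enorm_ge0 e.
  have h4 : (n%:R : R) <= n.+1%:R by rewrite ler_nat.
  nra.
set E := N1 e.
have Ozt : O (t *: y + (1 - t) *: z) by apply: cO => //; rewrite (ltW t0) t1.
have := pr _ Ozt => /enorm_le_sq.
have -> : xb - (t *: y + (1 - t) *: z) = (w + e) - t *: (v0 + e).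
  by apply/matrixP => i j; rewrite /w /e /v0 !mxE; ring.
rewrite expand3 -/g.
have h_we := dotv_bound w e; have h_ee := dotv_bound e e.
have h_ev := dotv_bound e v0; have h_vv := dotv_bound v0 v0.
rewrite -/W -/E -/Vv in h_we h_ee h_ev h_vv.
set we := dotv w e; set ee := dotv e e; set ev := dotv e v0; set vv := dotv v0 v0.
set ww := dotv w w.
move=> H.
have E1 : E <= 1 by apply: le_trans (ltW hE) ep1.

move: h_we h_ee h_ev h_vv; rewrite !ler_norml => /andP [we1 we2] /andP [ee1 ee2] /andP [ev1 ev2] /andP [vv1 vv2].
rewrite -/E in E0 hE.
rewrite -/we -/ee -/ev -/vv in we1 we2 ee1 ee2 ev1 ev2 vv1 vv2.
have EE : E * E <= E by nra.
have S1 : 2 * we + ee - 2 * t * (we + ev + ee) <= E * K0.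
  have a1 : - (t * we) <= W * E by nra.
  have a2 : - (t * ev) <= E * Vv by nra.
  have a3 : - (t * ee) <= E * E by nra.
  rewrite /K0; nra.
have S2 : t * t * (vv + 2 * ev + ee) <= t * g.
  have b1 : vv + 2 * ev + ee <= L by rewrite /L; nra.
  nra.
have S3 : E * K0 < t * g by nra.
move: H; rewrite expr2; nra.
Qed.

Lemma obstacle_sep {R : realType} {n : nat} (O : set 'cV[R]_n) (xb p x : 'cV[R]_n) :
  convex_set O -> eopen O -> in_closure O p ->
  (forall y, O y -> enorm (xb - p) <= enorm (xb - y)) ->
  xb - p != 0 -> 0 <= dotv (xb - p) (x - p) -> ~ O x.
Proof.
move=> cO oO clp pr wn0 hx Ox.
have [ep ep0 hep] := oO x Ox.
have ww0 : 0 < dotv (xb - p) (xb - p).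
  rewrite lt0r dotv_ge0 andbT; apply/eqP => h; move/eqP: wn0; apply; exact: dotv_eq0.
move: ww0 hx pr wn0; set w := xb - p => ww0 hx pr wn0.
set ww := dotv w w in ww0.
set s := ep / (1 + ww).
have w1 : 0 < 1 + ww by rewrite addr_gt0.
have sE : s * (1 + ww) = ep by rewrite /s divfK // gt_eqF.
have s0 : 0 < s by rewrite /s divr_gt0.
have Oy : O (x + s *: w).
  apply: hep; rewrite addrAC subrr add0r.
  have h1 : enorm (s *: w) ^+ 2 < ep ^+ 2.
    rewrite enorm_sqr dotvZl dotvZr -/ww -sE; nra.
  have := enorm_ge0 (s *: w); nra.
have := @proj_var _ _ O xb p cO clp pr _ Oy; rewrite -/w.
have -> : x + s *: w - p = (x - p) + s *: w by rewrite addrAC.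
rewrite dotvDr dotvZr -/ww; nra.
Qed.

Lemma edist_lb {R : realType} {n : nat} (O : set 'cV[R]_n) (xb : 'cV[R]_n) (eps : R) :
  sdist O xb <= - eps -> forall y, O y -> eps <= enorm (xb - y).
Proof.
rewrite /sdist /edist => h y Oy.
set E1 := [set enorm (xb - y) | y in ~` O] in h.
set E2 := [set enorm (xb - y) | y in O] in h.
have lb1 : 0 <= inf E1.
  have [ne|e0] := pselect (E1 !=set0).
    by apply: lb_le_inf => // z [y' _ <-]; exact: enorm_ge0.
  have -> : E1 = set0 by apply/seteqP; split => z Ez //; exfalso; apply: e0; exists z.
  by rewrite inf0.
have hb2 : has_lbound E2 by exists 0 => z [y' _ <-]; exact: enorm_ge0.
have := ge_inf hb2 (_ : E2 (enorm (xb - y))).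
move=> /(_ (ex_intro2 _ _ y Oy erefl)); lra.
Qed.

Lemma w_lower {R : realType} {n : nat} (O : set 'cV[R]_n) (xb xb' p : 'cV[R]_n) (eps : R) :
  (forall y, O y -> eps <= enorm (xb - y)) -> in_closure O p ->
  eps - enorm (xb - xb') <= enorm (xb' - p).
Proof.
move=> hO clp; rewrite leNgt; apply/negP => hlt.
set d := eps - enorm (xb - xb') - enorm (xb' - p).
have d0 : 0 < d by rewrite /d; lra.
have [z Oz hz] := clp d d0.
have := hO z Oz.
have -> : xb - z = (xb - xb') + ((xb' - p) + (p - z)).
  by apply/matrixP => i j; rewrite !mxE; ring.
move=> h.
have t1 := enormD (xb - xb') ((xb' - p) + (p - z)).
have t2 := enormD (xb' - p) (p - z).
rewrite /d in hz; lra.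
Qed.

Lemma entry_dotv {R : realType} {n k : nat} (M : 'M[R]_(n,k)) (v : 'cV[R]_k) i :
  (M *m v) i 0 = dotv (row i M)^T v.
Proof. by rewrite /dotv trmxK -row_mul [RHS]mxE. Qed.

Lemma qfD {R : realType} {n : nat} (M N : 'M[R]_n) x : qf (M + N) x = qf M x + qf N x.
Proof. by rewrite !qfE mulmxDl dotvDr. Qed.
Lemma qfN {R : realType} {n : nat} (M : 'M[R]_n) x : qf (- M) x = - qf M x.
Proof. by rewrite !qfE mulNmx dotvNr. Qed.
Lemma qfB {R : realType} {n : nat} (M N : 'M[R]_n) x : qf (M - N) x = qf M x - qf N x.
Proof. by rewrite qfD qfN. Qed.
Lemma qfT {R : realType} {n k : nat} (M : 'M[R]_k) (L : 'M[R]_(k,n)) x :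
  qf (L^T *m M *m L) x = qf M (L *m x).
Proof. by rewrite /qf trmx_mul !mulmxA. Qed.

Lemma lam_lb1 {R : realType} (a0 a q B : R) :
  0 < q -> q <= B -> 0 <= a0 -> a0 <= a -> a0 ^+ 2 / B <= a ^+ 2 / q.
Proof.
move=> q0 qB a00 a0a.
have B0 : 0 < B by apply: lt_le_trans qB.
apply: (@le_trans _ _ (a0 ^+ 2 / q)).
  apply: ler_wpM2l; first exact: sqr_ge0.
  by rewrite lef_pV2 // posrE.
apply: ler_wpM2r; first by rewrite invr_ge0 ltW.
nra.
Qed.

Lemma lam_lb2 {R : realType} (a0 a q D : R) :
  0 < q -> 0 < D -> q <= D * a -> 0 < a0 -> a0 <= a -> a0 / D <= a ^+ 2 / q.
Proof.
move=> q0 D0 qD a00 a0a.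
have a0' : 0 < a by apply: lt_le_trans a0a.
rewrite ler_pdivrMr // mulrAC ler_pdivlMr //.
nra.
Qed.

Lemma T_le {R : realType} {nx nu nr pc pu m : nat}
  (Fc : 'M[R]_(pc, nx)) (fc : 'cV[R]_pc) (Fu : 'M[R]_(pu, nu)) (fu : 'cV[R]_pu)
  (Pi : 'I_m -> 'cV[R]_nx -> 'cV[R]_nx)
  (Gx : 'M[R]_(nx, nr)) (Gu : 'M[R]_(nu, nr)) (K : 'M[R]_(nu, nx)) (P : 'M[R]_nx)
  (alpha : 'I_(pc + pu + m) -> R) x r :
  (forall i, 0 < alpha i) ->
  Tset Fc fc Fu fu Pi Gx Gu K P alpha x r ->
  forall i, (crow Fc fc Fu fu Pi Gx Gu K r i).1 != 0 ->
  Vfun Gx P x r <= Lambda Fc fc Fu fu Pi Gx Gu K P i r.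
Proof.
move=> a0 hT i ci; have := @bigmax_le0E _ _ _ _ hT i ci.
rewrite pmulr_rle0 ?a0 //; lra.
Qed.

Lemma T_ge {R : realType} {nx nu nr pc pu m : nat}
  (Fc : 'M[R]_(pc, nx)) (fc : 'cV[R]_pc) (Fu : 'M[R]_(pu, nu)) (fu : 'cV[R]_pu)
  (Pi : 'I_m -> 'cV[R]_nx -> 'cV[R]_nx)
  (Gx : 'M[R]_(nx, nr)) (Gu : 'M[R]_(nu, nr)) (K : 'M[R]_(nu, nx)) (P : 'M[R]_nx)
  (alpha : 'I_(pc + pu + m) -> R) x r :
  (forall i, 0 < alpha i) ->
  (forall i, (crow Fc fc Fu fu Pi Gx Gu K r i).1 != 0 ->
    Vfun Gx P x r <= Lambda Fc fc Fu fu Pi Gx Gu K P i r) ->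
  Tset Fc fc Fu fu Pi Gx Gu K P alpha x r.
Proof.
move=> a0 h; apply: bigmax_le0I => i ci.
by rewrite pmulr_rle0 ?a0 // subr_le0; apply: h.
Qed.

Lemma entryD {R : realType} {n k : nat} (X Y : 'M[R]_(n,k)) i j : (X + Y) i j = X i j + Y i j.
Proof. by rewrite !mxE. Qed.
Lemma entryN {R : realType} {n k : nat} (X : 'M[R]_(n,k)) i j : (- X) i j = - X i j.
Proof. by rewrite !mxE. Qed.
Lemma entryB {R : realType} {n k : nat} (X Y : 'M[R]_(n,k)) i j : (X - Y) i j = X i j - Y i j.
Proof. by rewrite !mxE. Qed.
Lemma sp1 (a b : nat) (k : 'I_a) : split (lshift b k) = inl k.
Proof. exact: (unsplitK (inl k)). Qed.
Lemma sp2 (a b : nat) (k : 'I_b) : split (rshift a k) = inr k.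
Proof. exact: (unsplitK (inr k)). Qed.

Lemma mul_shift {R : realType} {k n l : nat} (M : 'M[R]_(k,n)) (G : 'M[R]_(n,l)) (r r' : 'cV[R]_l) :
  M *m (G *m r') = M *m (G *m r) + (M *m G) *m (r' - r).
Proof. by rewrite !mulmxA mulmxBr addrC subrK. Qed.
Lemma mul_shift1 {R : realType} {n l : nat} (G : 'M[R]_(n,l)) (r r' : 'cV[R]_l) :
  G *m r' = G *m r + G *m (r' - r).
Proof. by rewrite mulmxBr addrC subrK. Qed.

Theorem lemma3 (R : realType) (nx nu nr pc pu m : nat)
  (A : 'M[R]_nx) (B : 'M[R]_(nx, nu)) (Gx : 'M[R]_(nx, nr)) (Gu : 'M[R]_(nu, nr))
  (Fc : 'M[R]_(pc, nx)) (fc : 'cV[R]_pc) (Fu : 'M[R]_(pu, nu)) (fu : 'cV[R]_pu)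
  (O : 'I_m -> set 'cV[R]_nx) (Pi : 'I_m -> 'cV[R]_nx -> 'cV[R]_nx)
  (eps : R) (K : 'M[R]_(nu, nx)) (Q P : 'M[R]_nx) (Rw : 'M[R]_nu)
  (alpha : 'I_(pc + pu + m) -> R) :
  stabilizable A B ->
  equilibrium_basis A B Gx Gu ->
  ebounded (polyhedron Fc fc) ->
  ebounded (polyhedron Fu fu) ->
  (forall j, [/\ convex_set (O j), eopen (O j) & O j !=set0]) ->
  (forall j x, is_proj (O j) x (Pi j x)) ->
  0 < eps ->
  posdef Q -> posdef Rw -> posdef P ->
  psd (- (K^T *m Rw *m K + Q) - ((A - B *m K)^T *m P *m (A - B *m K) - P)) ->
  (forall i, 0 < alpha i) ->
  (* (c) *)
  (forall x r, Reps Fc fc Fu fu O Gx Gu eps r ->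
     Tset Fc fc Fu fu Pi Gx Gu K P alpha x r ->
     [/\ Tset Fc fc Fu fu Pi Gx Gu K P alpha (A *m x + B *m kappaT Gx Gu K x r) r,
         Xset Fc fc O x
       & polyhedron Fu fu (kappaT Gx Gu K x r)]) /\
  (* (d) *)
  (forall r, Reps Fc fc Fu fu O Gx Gu eps r ->
     interior_pt (Tset Fc fc Fu fu Pi Gx Gu K P alpha) (xbar Gx r) r).
Proof.
move=> _ eqb _ _ hO hPi eps0 pQ pR pP hpsd alpha0.
have eqA : A *m Gx + B *m Gu = Gx.
  case: eqb => hM _ _; move: hM; rewrite mul_row_col mulmxBl mul1mx => hM.
  by apply/eqP; rewrite -subr_eq0 -hM; apply/eqP; rewrite addrAC.
have wn0 : forall r j, Reps Fc fc Fu fu O Gx Gu eps r ->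
    xbar Gx r - Pi j (xbar Gx r) != 0.
  move=> r j [_ hOb _]; apply/eqP => h.
  have hlb := @edist_lb _ _ _ _ _ (hOb j).
  have [clp _] := hPi j (xbar Gx r).
  have [y Oy hy] := clp eps eps0.
  move/eqP: h; rewrite subr_eq0 => /eqP h; rewrite -h in hy; have := hlb y Oy; lra.
split.
  move=> x r hr hT.
  have hTle := @T_le _ _ _ _ _ _ _ Fc fc Fu fu Pi Gx Gu K P alpha x r alpha0 hT.
  split.
  - apply: (@T_ge _ _ _ _ _ _ _ Fc fc Fu fu Pi Gx Gu K P alpha _ r alpha0) => i ci.
    apply: le_trans (hTle i ci).
    rewrite /Vfun.
    have -> : A *m x + B *m kappaT Gx Gu K x r - xbar Gx r = (A - B *m K) *m (x - xbar Gx r).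
      have e2 : Gx *m r = A *m (Gx *m r) + B *m (Gu *m r) by rewrite !mulmxA -mulmxDl eqA.
      rewrite /kappaT /ubar /xbar.
      rewrite !(mulmxBr, mulmxDr, mulmxBl, mulmxDl, mulmxN, mulNmx) -!mulmxA.
      move: e2; move: (A *m x) (B *m (Gu *m r)) (B *m (K *m x)) (B *m (K *m (Gx *m r))) (A *m (Gx *m r)).
      move: (Gx *m r) => g a b c d f e2; rewrite e2.
      by apply/matrixP => i0 j0; rewrite !mxE; ring.
    have := hpsd (x - xbar Gx r); rewrite !(qfB, qfN, qfD) !qfT.
    have := @posdef_psd _ _ Q pQ (x - xbar Gx r); have := @posdef_psd _ _ Rw pR (K *m (x - xbar Gx r)).
    rewrite -!qfE; lra.
  - have [hC hOb hU] := hr.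
    split.
      move=> ic; set c := (row ic Fc)^T.
      have hCi := hC ic; rewrite entryB entry_dotv -/c in hCi.
      have [c0|cn0] := eqVneq c 0.
        rewrite entry_dotv -/c c0 dotv0l; move: hCi; rewrite c0 dotv0l; lra.
      have hi := hTle (lshift m (lshift pu ic)).
      rewrite /Lambda /crow !sp1 /= -/c in hi.
      rewrite entry_dotv -/c.
      apply: (@key_halfspace _ _ P c x (xbar Gx r) (fc ic 0) pP cn0 _ (hi cn0)).
      lra.
    move=> j Oj.
    have [cO oO _] := hO j.
    have [clp pr] := hPi j (xbar Gx r).
    have hw := wn0 r j hr.
    have hi := hTle (rshift (pc + pu) j).
    rewrite /Lambda /crow !sp2 /= in hi.
    move: hi pr hw; set p := Pi j (xbar Gx r); set w := xbar Gx r - p => hi pr hw.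
    have cn0 : - w != 0 by rewrite oppr_eq0.
    have hk := @key_halfspace _ _ P (- w) x (xbar Gx r) (- dotv w p) pP cn0 _ (hi cn0).
    apply: (@obstacle_sep _ _ (O j) (xbar Gx r) p x cO oO clp pr hw _ Oj).
    rewrite -/w dotvBr; move: hk; rewrite dotvNl.
    have h1 : 0 <= - dotv w p - - dotv w (xbar Gx r).
      have := dotv_ge0 w; rewrite {2}/w dotvBr; lra.
    move/(_ h1) => hh; rewrite dotvNl in hh; lra.
  - have [hC hOb hU] := hr.
    move=> iu; set cc := (row iu (Fu *m K))^T.
    have hUi := hU iu; rewrite entryB /ubar in hUi.
    rewrite /kappaT /ubar /xbar.
    have -> : Fu *m (Gu *m r - K *m (x - Gx *m r)) =
        Fu *m (Gu *m r) - (Fu *m K) *m x + (Fu *m K) *m (Gx *m r).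
      rewrite !(mulmxBr, mulmxDr, mulmxN) -!mulmxA.
      move: (Fu *m (Gu *m r)) (Fu *m (K *m x)) (Fu *m (K *m (Gx *m r))) => a b c.
      by apply/matrixP => i0 j0; rewrite !mxE; ring.
    rewrite entryD entryB !(entry_dotv (Fu *m K)) -/cc.
    have [c0|cn0] := eqVneq cc 0.
      rewrite c0 !dotv0l; lra.
    have hi := hTle (lshift m (rshift pc iu)).
    rewrite /Lambda /crow sp1 sp2 /= -/cc in hi.
    have ncn0 : - cc != 0 by rewrite oppr_eq0.
    have := @key_halfspace _ _ P (- cc) x (xbar Gx r)
      (fu iu 0 - (Fu *m ubar Gu r) iu 0 - (Fu *m K *m xbar Gx r) iu 0) pP ncn0 _ (hi ncn0).
    rewrite !dotvNl !entry_dotv -/cc /ubar /xbar.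
    rewrite !entry_dotv in hUi.
    move=> hh; have := hh (_ : 0 <= _); lra.
move=> r hr; have [hC hOb hU] := hr.
set CP := N1m P; set CPi := N1m (invmx P); set G := N1m Gx.
set nxR := (nx%:R : R); set nrR := (nr%:R : R).
set S := 1 + N1m (Fc *m Gx) + N1m (Fu *m Gu) + G.
set D := 1 + CPi * (N1m Fc ^+ 2 + N1m (Fu *m K) ^+ 2 + nxR ^+ 2).
set mu := (eps / 2) ^+ 2 / D.
set K1 := nxR + G * nrR.
have CP0 : 0 <= CP by exact: N1m_ge0.
have CPi0 : 0 <= CPi by exact: N1m_ge0.
have G0 : 0 <= G by exact: N1m_ge0.
have nx0 : 0 <= nxR by rewrite ler0n.
have nr0 : 0 <= nrR by rewrite ler0n.
have NFcG := N1m_ge0 (Fc *m Gx); have NFuG := N1m_ge0 (Fu *m Gu).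
have NFc := N1m_ge0 Fc; have NFuK := N1m_ge0 (Fu *m K).
have S0 : 0 < S by rewrite /S; lra.
have D0 : 0 < D.
  rewrite /D; have : 0 <= CPi * (N1m Fc ^+ 2 + N1m (Fu *m K) ^+ 2 + nxR ^+ 2).
    by apply: mulr_ge0 => //; rewrite !addr_ge0 // sqr_ge0.
  lra.
have mu0 : 0 < mu by rewrite /mu divr_gt0 // exprn_gt0 // divr_gt0.
have K10 : 0 <= K1 by rewrite /K1; apply: addr_ge0 => //; apply: mulr_ge0.
set e1 := eps / (4 * S * (nrR + 1)).
have nr1 : 0 < nrR + 1 by lra.
have den1 : 0 < 4 * S * (nrR + 1) by rewrite !mulr_gt0.
have e1E : e1 * (4 * S * (nrR + 1)) = eps by rewrite /e1 divfK // gt_eqF.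
have e10 : 0 < e1 by rewrite /e1 divr_gt0.
set e2 := mu / ((CP + 1) * (K1 + 1) ^+ 2).
have cp1 : 0 < CP + 1 by lra.
have k11 : 0 < K1 + 1 by lra.
have den2 : 0 < (CP + 1) * (K1 + 1) ^+ 2 by rewrite mulr_gt0 // exprn_gt0.
have e2E : e2 * ((CP + 1) * (K1 + 1) ^+ 2) = mu by rewrite /e2 divfK // gt_eqF.
have e20 : 0 < e2 by rewrite /e2 divr_gt0.
exists (Num.min 1 (Num.min e1 e2)).
  by rewrite !lt_min ltr01 e10 e20.
move=> x' r' hx hr'.
have he0 : 0 < Num.min 1 (Num.min e1 e2) by rewrite !lt_min ltr01 e10 e20.
have he1 : Num.min 1 (Num.min e1 e2) <= 1 by rewrite ge_min lexx.
have he2 : Num.min 1 (Num.min e1 e2) <= e1 by rewrite !ge_min lexx orbT.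
have he3 : Num.min 1 (Num.min e1 e2) <= e2 by rewrite !ge_min lexx !orbT.
move: hx hr' he0 he1 he2 he3; set e := Num.min 1 (Num.min e1 e2) => hx hr' he0 he1 he2 he3.
set dr := r' - r.
have Ndr0 := N1_ge0 dr.
have hdr : N1 dr <= nrR * e.
  have := N1_le_enorm dr; have := enorm_ge0 dr; rewrite -/nrR; nra.
have F1 : S * N1 dr <= eps / 4.
  have -> : eps / 4 = S * ((nrR + 1) * e1) by rewrite -e1E; field.
  apply: ler_wpM2l; first lra.
  have : nrR * e <= nrR * e1 by apply: ler_wpM2l.
  have : nrR * e1 <= (nrR + 1) * e1 by apply: ler_wpM2r; lra.
  lra.
have bFcG : forall i0, `|((Fc *m Gx) *m dr) i0 0| <= eps / 4.
  move=> i0;  apply: le_trans (entry_le_N1 _ _) _; apply: le_trans (N1_mul _ _) _;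
  apply: le_trans F1; apply: ler_wpM2r => //; rewrite /S; lra.
have bFuG : forall i0, `|((Fu *m Gu) *m dr) i0 0| <= eps / 4.
  move=> i0;  apply: le_trans (entry_le_N1 _ _) _; apply: le_trans (N1_mul _ _) _;
  apply: le_trans F1; apply: ler_wpM2r => //; rewrite /S; lra.
have bG : N1 (Gx *m dr) <= eps / 4.
  apply: le_trans (N1_mul _ _) _; apply: le_trans F1; apply: ler_wpM2r => //; rewrite /S /G; lra.
apply: (@T_ge _ _ _ _ _ _ _ Fc fc Fu fu Pi Gx Gu K P alpha _ _ alpha0) => i ci.
have hV : Vfun Gx P x' r' <= mu.
  rewrite /Vfun qfE.
  apply: le_trans (ler_norm _) _; apply: le_trans (qf_bound _ _) _.
  have hN : N1 (x' - xbar Gx r') <= e * K1.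
    rewrite /xbar (mul_shift1 Gx r r') -/dr opprD addrA.
    apply: le_trans (N1B _ _) _.
    have := N1_le_enorm (x' - Gx *m r); have := enorm_ge0 (x' - Gx *m r).
    rewrite -/nxR /xbar in hx *; rewrite /K1 => h1 h2.
    have h3 := N1_mul Gx dr; rewrite -/G in h3.
    have h4 : G * N1 dr <= G * (nrR * e) by apply: ler_wpM2l.
    have h5 : nxR * enorm (x' - Gx *m r) <= nxR * e by apply: ler_wpM2l => //; apply: ltW.
    nra.
  have hN0 := N1_ge0 (x' - xbar Gx r').
  rewrite -/CP.
  have : N1 (x' - xbar Gx r') ^+ 2 <= e ^+ 2 * K1 ^+ 2 by rewrite -exprMn; apply: lerXn2r => //; rewrite nnegrE //; nra.
  move=> hsq.
  have T0 : 0 <= (K1 + 1) ^+ 2 by exact: sqr_ge0.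
  have a1 : CP * N1 (x' - xbar Gx r') ^+ 2 <= CP * (e ^+ 2 * K1 ^+ 2) by apply: ler_wpM2l.
  have a2 : e ^+ 2 * K1 ^+ 2 <= e * (K1 + 1) ^+ 2.
    have : e ^+ 2 <= e by rewrite expr2; nra.
    have : K1 ^+ 2 <= (K1 + 1) ^+ 2 by nra.
    have : 0 <= K1 ^+ 2 by exact: sqr_ge0.
    nra.
  have a3 : CP * (e * (K1 + 1) ^+ 2) <= (CP + 1) * (e * (K1 + 1) ^+ 2).
    apply: ler_wpM2r; [nra | lra].
  have a4 : e * (K1 + 1) ^+ 2 <= e2 * (K1 + 1) ^+ 2 by apply: ler_wpM2r.
  have a5 : (CP + 1) * (e * (K1 + 1) ^+ 2) <= (CP + 1) * (e2 * (K1 + 1) ^+ 2) by apply: ler_wpM2l => //; lra.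
  have a6 : CP * (e ^+ 2 * K1 ^+ 2) <= CP * (e * (K1 + 1) ^+ 2) by apply: ler_wpM2l.
  have : (CP + 1) * (e2 * (K1 + 1) ^+ 2) = mu by rewrite -e2E; ring.
  lra.
apply: le_trans hV _.
move: ci; rewrite /Lambda /crow.
case: (split i) => [i1|j]; [case: (split i1) => [ic|iu]|] => /= ci.
- set c := (row ic Fc)^T in ci *.
  have q0 := @qinv_pos _ _ P c pP ci.
  have hq : qf (invmx P) c <= D.
    rewrite qfE; apply: le_trans (ler_norm _) _; apply: le_trans (qf_bound _ _) _.
    rewrite -/CPi.
    have h1 := N1_rowT Fc ic; rewrite -/c in h1.
    have h0 := N1_ge0 c.
    have h2 : N1 c ^+ 2 <= N1m Fc ^+ 2 by apply: lerXn2r => //; rewrite nnegrE.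
    have h3 : CPi * N1 c ^+ 2 <= CPi * N1m Fc ^+ 2 by apply: ler_wpM2l.
    have h4 : 0 <= CPi * (N1m (Fu *m K) ^+ 2 + nxR ^+ 2) by apply: mulr_ge0 => //; rewrite addr_ge0 // sqr_ge0.
    rewrite /D; nra.
  apply: (@lam_lb1 _ (eps / 2) _ _ D q0 hq); first lra.
  rewrite -[(c^T *m xbar Gx r') 0 0]/(dotv c (xbar Gx r')) /c -entry_dotv /xbar (mul_shift Fc Gx r r') -/dr entryD.
  have := hC ic; rewrite entryB /xbar.
  have := bFcG ic; rewrite ler_norml => /andP [b1 b2].
  lra.
- set cc := (row iu (Fu *m K))^T in ci *.
  have q0 := @qinv_pos _ _ P (- cc) pP ci.
  have hq : qf (invmx P) (- cc) <= D.
    rewrite qfE; apply: le_trans (ler_norm _) _; apply: le_trans (qf_bound _ _) _.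
    rewrite -/CPi N1N.
    have h1 := N1_rowT (Fu *m K) iu; rewrite -/cc in h1.
    have h0 := N1_ge0 cc.
    have h2 : N1 cc ^+ 2 <= N1m (Fu *m K) ^+ 2 by apply: lerXn2r => //; rewrite nnegrE.
    have h3 : CPi * N1 cc ^+ 2 <= CPi * N1m (Fu *m K) ^+ 2 by apply: ler_wpM2l.
    have h4 : 0 <= CPi * (N1m Fc ^+ 2 + nxR ^+ 2) by apply: mulr_ge0 => //; rewrite addr_ge0 // sqr_ge0.
    rewrite /D; nra.
  apply: (@lam_lb1 _ (eps / 2) _ _ D q0 hq); first lra.
  rewrite -[((- cc)^T *m xbar Gx r') 0 0]/(dotv (- cc) (xbar Gx r')) dotvNl.
  rewrite (entry_dotv (Fu *m K)) -/cc /ubar /xbar (mul_shift Fu Gu r r') -/dr entryD.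
  have := hU iu; rewrite entryB /ubar.
  have := bFuG iu; rewrite ler_norml => /andP [b1 b2].
  lra.
- move: ci; set p := Pi j (xbar Gx r'); set w := xbar Gx r' - p => ci.
  have aE : - ((w^T *m p) 0 0) - ((- w)^T *m xbar Gx r') 0 0 = dotv w w.
    rewrite -[((w^T *m p) 0 0)]/(dotv w p) -[((- w)^T *m xbar Gx r') 0 0]/(dotv (- w) (xbar Gx r')) dotvNl.
    have -> : dotv w w = dotv w (xbar Gx r' - p) by [].
    rewrite dotvBr; lra.
  rewrite aE.
  have q0 := @qinv_pos _ _ P (- w) pP ci.
  have lbO := @edist_lb _ _ _ _ _ (hOb j).
  have [clp _] := hPi j (xbar Gx r').
  have hw := @w_lower _ _ (O j) (xbar Gx r) (xbar Gx r') p eps lbO clp.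
  rewrite -/w in hw.
  have hd : enorm (xbar Gx r - xbar Gx r') <= eps / 4.
    rewrite /xbar (mul_shift1 Gx r r') -/dr opprD addrA subrr add0r enormN.
    apply: le_trans (enorm_le_N1 _) bG.
  have ew0 := enorm_ge0 w.
  have ew : 3 * eps / 4 <= enorm w by lra.
  have aw : dotv w w = enorm w ^+ 2 by rewrite enorm_sqr.
  have hq : qf (invmx P) (- w) <= D * dotv w w.
    rewrite qfE; apply: le_trans (ler_norm _) _; apply: le_trans (qf_bound _ _) _.
    rewrite -/CPi N1N.
    have h1 := N1_le_enorm w; rewrite -/nxR in h1.
    have h0 := N1_ge0 w.
    have h2 : N1 w ^+ 2 <= (nxR * enorm w) ^+ 2 by apply: lerXn2r => //; rewrite nnegrE // mulr_ge0.
    have h3 : CPi * N1 w ^+ 2 <= CPi * (nxR ^+ 2 * dotv w w) by apply: ler_wpM2l => //; rewrite aw -exprMn.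
    have h5 : 0 <= nxR ^+ 2 * dotv w w by rewrite mulr_ge0 ?sqr_ge0 ?dotv_ge0.
    have h4 : CPi * (nxR ^+ 2 * dotv w w) <= D * dotv w w.
      rewrite mulrA; apply: ler_wpM2r; first exact: dotv_ge0.
      have : 0 <= CPi * (N1m Fc ^+ 2 + N1m (Fu *m K) ^+ 2) by apply: mulr_ge0 => //; rewrite addr_ge0 // sqr_ge0.
      rewrite /D; lra.
    lra.
  apply: (@lam_lb2 _ ((eps / 2) ^+ 2) (dotv w w) _ D q0 D0 hq).
    by rewrite exprn_gt0 // divr_gt0.
  rewrite aw; have : eps / 2 <= enorm w by lra.
  move=> h; apply: lerXn2r => //; rewrite nnegrE //; lra.
Qed.
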